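(* Let $R$ be a commutative ring and let $R^{(-1)}R$ denote the pointwise localization of $R$ with respect to the subset $S=R$. Then $\mathrm{Spec}(R^{(-1)}R)$ is Hausdorff with respect to the Zariski topology, and also Hausdorff with respect to the flat topology.
   Context: For $a,b$ in a commutative ring, $b$ is a pointwise inverse of $a$ if $a=a^2b$ and $b=b^2a$. For a subset $S\subseteq R$, $S^{(-1)}R=R[x_s:s\in S]/I$ where $I$ is generated by $sx_s^2-x_s$ and $s^2x_s-s$ ($s\in S$). The flat topology on $\mathrm{Spec}(A)$ is the topology having as a basis of open sets the sets $V(I)=\{\mathfrak p:I\subseteq\mathfrak p\}$ with $I$ ranging over finitely generated ideals of $A$. *)

(* Defs.v *)
From HB Require Import structures.
From mathcomp Require Import all_boot all_order all_algebra.
Set Implicit Arguments. Unset Strict Implicit. Unset Printing Implicit Defensive.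
Import GRing.Theory.
Local Open Scope ring_scope.

(* A (with structure map phi : R -> A and elements x_s := x s) is the
   pointwise localization  R^{(-1)}R = R[x_s : s in R] / I, where I is
   generated by s x_s^2 - x_s and s^2 x_s - s.  Since MathComp has no
   polynomial rings in infinitely many variables, we describe this presented
   R-algebra by its defining universal property (presentation by generators
   x_s and relations s x_s^2 = x_s, s^2 x_s = s). *)
Definition is_pointwise_localization (R A : comPzRingType)
    (phi : {rmorphism R -> A}) (x : R -> A) : Prop :=
  (forall s : R, phi s * x s ^+ 2 = x s /\ phi s ^+ 2 * x s = phi s) /\
  forall (B : comPzRingType) (psi : {rmorphism R -> B}) (y : R -> B),
    (forall s : R, psi s * y s ^+ 2 = y s /\ psi s ^+ 2 * y s = psi s) ->
    (exists theta : {rmorphism A -> B},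
        (forall r, theta (phi r) = psi r) /\ (forall s, theta (x s) = y s)) /\
    (forall th1 th2 : {rmorphism A -> B},
        (forall r, th1 (phi r) = th2 (phi r)) ->
        (forall s, th1 (x s) = th2 (x s)) ->
        forall a, th1 a = th2 a).

Definition is_prime_ideal (A : comPzRingType) (P : A -> Prop) : Prop :=
  [/\ P 0,
      (forall a b, P a -> P b -> P (a + b)),
      (forall r a, P a -> P (r * a)),
      ~ P 1 &
      (forall a b, P (a * b) -> P a \/ P b)].

Definition Spec (A : comPzRingType) := {P : A -> Prop | is_prime_ideal P}.

Definition ideal_span (A : comPzRingType) (l : seq A) : A -> Prop :=
  fun a => exists c : seq A, a = \sum_(i < size l) c`_i * l`_i.

Definition V (A : comPzRingType) (I : A -> Prop) : Spec A -> Prop :=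
  fun p => forall a, I a -> sval p a.

Definition zariski_open (A : comPzRingType) (U : Spec A -> Prop) : Prop :=
  exists E : A -> Prop, forall p, U p <-> ~ V E p.

Definition flat_open (A : comPzRingType) (U : Spec A -> Prop) : Prop :=
  forall p, U p -> exists l : seq A,
    V (ideal_span l) p /\ (forall q, V (ideal_span l) q -> U q).

Definition hausdorff (T : Type) (is_open : (T -> Prop) -> Prop) : Prop :=
  forall p q : T, p <> q ->
    exists U W : T -> Prop, [/\ is_open U, is_open W, U p, W q &
                              forall r, ~ (U r /\ W r)].

(* Main.v *)
From HB Require Import structures.
From mathcomp Require Import all_boot all_order all_algebra.
Require Import Defs.
From Stdlib Require Import Classical ClassicalDescription FunctionalExtensionality PropExtensionality ProofIrrelevance.
Set Implicit Arguments. Unset Strict Implicit. Unset Printing Implicit Defensive.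
Import GRing.Theory.
Local Open Scope ring_scope.

Section PrimeFacts.
Variables (A : comPzRingType) (P : A -> Prop) (hP : is_prime_ideal P).
Lemma pD a b : P a -> P b -> P (a + b). Proof. by case: hP => _ h _ _ _; apply: h. Qed.
Lemma pMl r a : P a -> P (r * a). Proof. by case: hP => _ _ h _ _; apply: h. Qed.
Lemma pMr r a : P a -> P (a * r). Proof. by rewrite mulrC; apply: pMl. Qed.
Lemma p0 : P 0. Proof. by case: hP => h _ _ _ _. Qed.
Lemma p1 : ~ P 1. Proof. by case: hP => _ _ _ h _. Qed.
Lemma pprime a b : P (a * b) -> P a \/ P b. Proof. by case: hP => _ _ _ _ h; apply: h. Qed.
Lemma pN a : P a -> P (- a). Proof. by move=> h; rewrite -mulN1r; apply: pMl. Qed.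
Lemma pB a b : P a -> P b -> P (a - b). Proof. by move=> ha hb; apply: pD => //; apply: pN. Qed.
Lemma pBr a b : P (a - b) -> P b -> P a.
Proof. by move=> h hb; rewrite -(subrK b a); apply: pD. Qed.
Lemma pBl a b : P (a - b) -> P a -> P b.
Proof. move=> h ha; have ->: b = a - (a - b) by rewrite opprB addrC subrK.
by apply: pB. Qed.
End PrimeFacts.

Lemma span1 (A : comPzRingType) (p : Spec A) (e : A) :
  V (ideal_span [:: e]) p <-> sval p e.
Proof.
case: p => P hP /=; split.
  move=> h; apply: h; exists [:: 1]; by rewrite big_ord1 /= mul1r.
move=> he a [c ->]; rewrite big_ord1 /=; exact: pMl.
Qed.

Lemma sep (A : comPzRingType) (p q : Spec A) (e : A) : e * e = e ->
  sval p e -> ~ sval q e ->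
  (exists U W : Spec A -> Prop, [/\ zariski_open U, zariski_open W, U p, W q &
                              forall r, ~ (U r /\ W r)]) /\
  (exists U W : Spec A -> Prop, [/\ flat_open U, flat_open W, U p, W q &
                              forall r, ~ (U r /\ W r)]).
Proof.
move=> ee pe qe; split.
  exists (fun r => ~ sval r (1 - e)), (fun r => ~ sval r e); split.
  - exists (fun a => a = 1 - e) => r; split => h.
      by move=> hv; apply: h; apply: hv.
    by move=> hr; apply: h => a ->.
  - exists (fun a => a = e) => r; split => h.
      by move=> hv; apply: h; apply: hv.
    by move=> hr; apply: h => a ->.
  - case: p pe => P hP /= pe h.
    by apply: (p1 hP); rewrite -(subrK e 1); apply: pD.
  - exact: qe.
  - case=> R hR /= [h1 h2].
    have: R ((1 - e) * e) by rewrite mulrBl mul1r ee subrr; exact: p0.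
    by case/(pprime hR).
exists (fun r => sval r e), (fun r => sval r (1 - e)); split => //.
- move=> r hr; exists [:: e]; split; first by apply/span1.
  by move=> s /span1.
- move=> r hr; exists [:: 1 - e]; split; first by apply/span1.
  by move=> s /span1.
- case: q qe => Q hQ /= qe.
  case: (classic (Q (1 - e))) => // h; exfalso.
  have: Q ((1 - e) * e) by rewrite mulrBl mul1r ee subrr; exact: p0.
  by case/(pprime hQ).
- case=> R hR /= [h1 h2].
  by apply: (p1 hR); rewrite -(subrK e 1); apply: pD.
Qed.
Section Sub.
Variables (R A : comPzRingType) (S : pred A) (hS : subring_closed S).
Variables (phi : {rmorphism R -> A}) (x : R -> A).
Hypothesis gen1 : forall r, S (phi r).
Hypothesis gen2 : forall s, S (x s).
Definition ST := {a : A | S a}.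
HB.instance Definition _ := [isSub for (@proj1_sig A (fun a => S a)) : ST -> A].
HB.instance Definition _ := [Choice of ST by <:].
HB.instance Definition _ := GRing.SubChoice_isSubComPzRing.Build A S ST hS.

Definition psi (r : R) : ST := Sub (phi r) (gen1 r).
Definition y (s : R) : ST := Sub (x s) (gen2 s).

Lemma psi_z : zmod_morphism psi.
Proof. by move=> a b; apply: val_inj; rewrite /= rmorphB. Qed.
Lemma psi_m : monoid_morphism psi.
Proof. by split; [apply: val_inj; rewrite /= rmorph1 | move=> a b; apply: val_inj; rewrite /= rmorphM]. Qed.
HB.instance Definition _ := GRing.isZmodMorphism.Build R ST psi psi_z.
HB.instance Definition _ := GRing.isMonoidMorphism.Build R ST psi psi_m.

Lemma all_S (hA : is_pointwise_localization phi x) : forall a, S a.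
Proof.
case: hA => rel up.
have relB : forall s, psi s * y s ^+ 2 = y s /\ psi s ^+ 2 * y s = psi s.
  move=> s; split; apply: val_inj; rewrite /= ?rmorphM ?rmorphXn /=; by case: (rel s).
case: (up _ psi y relB) => [[theta [th1 th2]] _].
case: (up _ phi x rel) => _ uniq.
move=> a.
have E := uniq (idfun : A -> A) (val \o theta) _ _ a.
rewrite /= in E; rewrite E; first exact: valP.
  by move=> r; rewrite /= th1.
by move=> s; rewrite /= th2.
Qed.
End Sub.

From mathcomp Require Import ring.
Lemma sep2 (A : comPzRingType) (p q : Spec A) (e : A) : e * e = e ->
  (sval p e /\ ~ sval q e) \/ (sval q e /\ ~ sval p e) ->
  (exists U W : Spec A -> Prop, [/\ zariski_open U, zariski_open W, U p, W q &
                              forall r, ~ (U r /\ W r)]) /\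
  (exists U W : Spec A -> Prop, [/\ flat_open U, flat_open W, U p, W q &
                              forall r, ~ (U r /\ W r)]).
Proof.
move=> ee [[h1 h2]|[h1 h2]]; first exact: (sep ee h1 h2).
have [[U [W [a b c d f]]] [U' [W' [a' b' c' d' f']]]] := sep ee h1 h2.
split.
  exists W, U; split => // r [? ?]; exact: (f r).
exists W', U'; split => // r [? ?]; exact: (f' r).
Qed.

Lemma distinguish (A : comPzRingType) (p q : Spec A) : p <> q ->
  exists z, (sval p z /\ ~ sval q z) \/ (sval q z /\ ~ sval p z).
Proof.
move=> npq; apply: NNPP => H; apply: npq.
have E : forall z, sval p z = sval q z.
  move=> z; apply: propositional_extensionality; split => h.
    by apply: NNPP => h'; apply: H; exists z; left.
  by apply: NNPP => h'; apply: H; exists z; right.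
clear H; move: E; case: p => P hP; case: q => Q hQ /= E.
have EPQ : P = Q by apply: functional_extensionality.
subst Q; congr exist; exact: proof_irrelevance.
Qed.

Lemma same_contr (R A : comPzRingType) (phi : {rmorphism R -> A}) (x : R -> A)
  (hA : is_pointwise_localization phi x) (P Q : A -> Prop)
  (hP : is_prime_ideal P) (hQ : is_prime_ideal Q)
  (hc : forall r, P (phi r) <-> Q (phi r)) z : P z -> Q z.
Proof.
pose Sp a := exists r t, ~ P (phi t) /\ P (a * phi t - phi r) /\ Q (a * phi t - phi r).
pose Sb : pred A := fun a => if excluded_middle_informative (Sp a) then true else false.
have SbP : forall a, Sb a <-> Sp a.
  by move=> a; rewrite /Sb; case: excluded_middle_informative.
have nQ : forall t, ~ P (phi t) -> ~ Q (phi t) by move=> t h /hc.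
have hS : subring_closed Sb.
  split.
  - rewrite unfold_in; apply/SbP; exists 1, 1; rewrite rmorph1 mul1r subrr; split.
      exact: p1.
    by split; apply: p0.
  - move=> a b; rewrite !unfold_in => /SbP [r1 [t1 [n1 [P1 Q1]]]] /SbP [r2 [t2 [n2 [P2 Q2]]]].
    apply/SbP; exists (r1 * t2 - r2 * t1), (t1 * t2).
    have key : (a - b) * phi (t1 * t2) - phi (r1 * t2 - r2 * t1) =
      (a * phi t1 - phi r1) * phi t2 - (b * phi t2 - phi r2) * phi t1.
      rewrite rmorphB !rmorphM; ring.
    rewrite key; split; first by rewrite rmorphM => /(pprime hP) [].
    split; [apply: (pB hP) | apply: (pB hQ)]; by apply: pMr.
  - move=> a b; rewrite !unfold_in => /SbP [r1 [t1 [n1 [P1 Q1]]]] /SbP [r2 [t2 [n2 [P2 Q2]]]].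
    apply/SbP; exists (r1 * r2), (t1 * t2).
    have key : (a * b) * phi (t1 * t2) - phi (r1 * r2) =
      (a * phi t1 - phi r1) * (b * phi t2) + phi r1 * (b * phi t2 - phi r2).
      rewrite !rmorphM; ring.
    rewrite key; split; first by rewrite rmorphM => /(pprime hP) [].
    split; [apply: (pD hP) | apply: (pD hQ)]; by [apply: pMr | apply: pMl].
have g1 : forall r, Sb (phi r).
  move=> r; apply/SbP; exists r, 1; rewrite rmorph1 mulr1 subrr; split; first exact: p1.
  by split; apply: p0.
have g2 : forall s, Sb (x s).
  case: hA => rel _.
  move=> s; apply/SbP; case: (rel s) => r1 r2.
  case: (classic (P (phi s))) => hs.
    exists 0, 1; rewrite rmorph1 rmorph0 mulr1 subr0 -r1.
    split; first exact: p1.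
    by split; [apply: (pMr hP) | apply: (pMr hQ); apply/hc].
  exists 1, s; rewrite rmorph1; split => //.
  have key : phi s * (x s * phi s - 1) = 0 by transitivity (phi s ^+ 2 * x s - phi s); [ring | rewrite r2 subrr].
  split.
    by case: (pprime hP (a := phi s) (b := x s * phi s - 1)) => //; rewrite key; exact: p0.
  by case: (pprime hQ (a := phi s) (b := x s * phi s - 1)) => //; [rewrite key; exact: p0 | move/nQ: hs].
move=> hz.
have /SbP [r [t [nt [Pt Qt]]]] := all_S hS g1 g2 hA z.
have Pr : P (phi r) by apply: (pBl hP Pt); apply: pMr.
have Qzt : Q (z * phi t) by apply: (pBr hQ Qt); apply/hc.
by case: (pprime hQ Qzt) => // /nQ.
Qed.

Unset Implicit Arguments.

Theorem lemma3p7 (R A : comPzRingType) (phi : {rmorphism R -> A}) (x : R -> A)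
  (hA : is_pointwise_localization phi x) :
  hausdorff (@zariski_open A) /\ hausdorff (@flat_open A).
Proof.
have key : forall p q : Spec A, p <> q -> exists e : A, e * e = e /\
    ((sval p e /\ ~ sval q e) \/ (sval q e /\ ~ sval p e)).
  move=> p q npq.
  have [z hz] := distinguish npq.
  case: p q npq hz => [P hP] [Q hQ] _ /= hz.
  case: (classic (exists r, (P (phi r) /\ ~ Q (phi r)) \/ (Q (phi r) /\ ~ P (phi r))))
    => [[r hr]|nr].
    have [r1 r2] := hA.1 r.
    exists (phi r * x r); split.
      by transitivity ((phi r ^+ 2 * x r) * x r); [ring | rewrite r2].
    have eq1 : phi r = phi r * (phi r * x r) by rewrite -{1}r2; ring.
    have iff : forall T : A -> Prop, is_prime_ideal T -> (T (phi r) <-> T (phi r * x r)).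
      move=> T hT; split => h; first by apply: (pMr hT).
      by rewrite eq1; apply: (pMl hT).
    case: hr => [[h1 h2]|[h1 h2]]; [left|right]; split.
    - by apply/iff.
    - by move/(iff _ hQ).
    - by apply/iff.
    - by move/(iff _ hP).
  exfalso.
  have hc : forall r, P (phi r) <-> Q (phi r).
    move=> r; split => h; apply: NNPP => h'; apply: nr; exists r; by [left | right].
  case: hz => [[h1 h2]|[h1 h2]].
    by apply: h2; apply: (same_contr hA hP hQ hc).
  by apply: h2; apply: (same_contr hA hQ hP) => // r; split => /hc.
split => p q npq; have [e [ee he]] := key p q npq; have [Z F] := sep2 ee he; done.
Qed.
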